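(* Let $X_1,\dots,X_n$ be i.i.d. from $P$ and $\mathcal{S}_n=\{X_1,\dots,X_n\}$. Assume $\rho>0$ and that there exist $t_0>0$ and $C_2<\infty$ such that the function $t\mapsto\rho(t)$ (with $\rho(0):=\rho$) is differentiable on $[0,t_0]$ with $|\rho'(t)|\le C_2$ there. Then for all $n\ge1$ and all $0<t<\min\{\rho/(2C_2),\,t_0\}$, $$\mathbb{P}\big(H(\mathcal{S}_n,\mathbb{M})>t\big)\;\le\;\frac{2^{d+1}}{\rho\,t^d}\exp\Big(-\frac{n\rho\,t^d}{2}\Big).$$
   Context: $\mathbb{M}\subset\mathbb{R}^D$ is a compact $d$-dimensional smooth submanifold with positive reach and $P$ is a probability distribution with support $\mathbb{M}$. $B(x,r)$ is the closed Euclidean ball of radius $r$ about $x$. The Hausdorff distance between sets $A,B\subset\mathbb{R}^D$ is $H(A,B)=\max\{\sup_{a\in A}\inf_{b\in B}\|a-b\|,\ \sup_{b\in B}\inf_{a\in A}\|a-b\|\}$. For $x\in\mathbb{M}$ and $t>0$ define $\rho(x,t)=P(B(x,t/2))/t^d$, $\rho(t)=\inf_{x\in\mathbb{M}}\rho(x,t)$, and $\rho=\lim_{t\downarrow0}\rho(t)$ (assumed to exist). *)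

(* Defs.v *)
From HB Require Import structures.
From mathcomp Require Import all_boot all_order all_algebra.
From mathcomp Require Import all_classical all_reals all_analysis.

Set Implicit Arguments.
Unset Strict Implicit.
Unset Printing Implicit Defensive.

Import Order.TTheory GRing.Theory Num.Theory.
Import numFieldNormedType.Exports.

Local Open Scope classical_set_scope.
Local Open Scope ring_scope.

Section Defs.
Variables (R : realType) (D : nat).

(* Points of R^D are row vectors; the topology on 'rV[R]_D is the product
   (= Euclidean) topology. *)
Definition eucl_norm (x : 'rV[R]_D) : R := Num.sqrt (\sum_(i < D) (x ord0 i) ^+ 2).

Definition eucl_ball (x : 'rV[R]_D) (r : R) : set 'rV[R]_D :=
  [set y | eucl_norm (y - x) <= r].

Definition borelD (A : set 'rV[R]_D) : Prop :=
  <<s [set U : set 'rV[R]_D | open U] >> A.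

(* Euclidean distance from a point to a set (in \bar R, +oo for the empty set) *)
Definition eucl_dist (x : 'rV[R]_D) (A : set 'rV[R]_D) : \bar R :=
  ereal_inf [set (eucl_norm (x - a))%:E | a in A].

Definition hausdorff_distance (A B : set 'rV[R]_D) : \bar R :=
  maxe (ereal_sup [set eucl_dist a B | a in A]) (ereal_sup [set eucl_dist b A | b in B]).

Definition prob_support (P : set 'rV[R]_D -> \bar R) : set 'rV[R]_D :=
  [set x | forall U, open U -> U x -> (0 < P U)%E].

(* positive reach (Federer): reach M = sup { r | every point at distance < r
   from M has a unique nearest_pt point in M }; positive reach <-> some r > 0
   has this property *)
Definition nearest_pt (M : set 'rV[R]_D) (x a : 'rV[R]_D) : Prop :=
  M a /\ (eucl_norm (x - a))%:E = eucl_dist x M.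

Definition positive_reach (M : set 'rV[R]_D) : Prop :=
  exists2 r : R, 0 < r &
    forall x, (eucl_dist x M < r%:E)%E ->
      forall a b, nearest_pt M x a -> nearest_pt M x b -> a = b.

Fixpoint iter_dir_deriv (vs : seq 'rV[R]_D) (f : 'rV[R]_D -> 'rV[R]_D) : 'rV[R]_D -> 'rV[R]_D :=
  match vs with
  | [::] => f
  | v :: vs' => fun x => 'D_v (iter_dir_deriv vs' f) x
  end.

(* f is C^oo on the open set U: all iterated (directional, hence partial)
   derivatives exist and are continuous on U *)
Definition smooth_on_open (U : set 'rV[R]_D) (f : 'rV[R]_D -> 'rV[R]_D) : Prop :=
  forall (vs : seq 'rV[R]_D) (x : 'rV[R]_D), U x ->
    {for x, continuous (iter_dir_deriv vs f)} /\
    forall v, derivable (iter_dir_deriv vs f) x v.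

Definition flat_part (d : nat) : set 'rV[R]_D :=
  [set y | forall i : 'I_D, (d <= i)%N -> y ord0 i = 0].

(* M is a d-dimensional C^oo embedded submanifold of R^D: locally
   diffeomorphic to R^d x {0} (submanifold charts) *)
Definition smooth_submanifold (d : nat) (M : set 'rV[R]_D) : Prop :=
  (d <= D)%N /\
  forall p, M p ->
    exists (U V : set 'rV[R]_D) (phi psi : 'rV[R]_D -> 'rV[R]_D),
      [/\ open U, U p, open V, smooth_on_open U phi & smooth_on_open V psi] /\
      [/\ phi @` U = V,
          (forall x, U x -> psi (phi x) = x),
          (forall y, V y -> phi (psi y) = y)
        & phi @` (U `&` M) = V `&` flat_part d].

End Defs.

(* Main.v *)
Require Import Defs.
From HB Require Import structures.
From mathcomp Require Import all_boot all_order all_algebra.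
From mathcomp Require Import all_classical all_reals all_analysis.
From mathcomp Require Import ring lra.
Import Order.TTheory GRing.Theory Num.Theory.
Import numFieldNormedType.Exports.
Local Open Scope classical_set_scope.
Local Open Scope ring_scope.
Section Eucl.
Variables (R : realType) (D : nat).
Local Notation en := (@eucl_norm R D).
Implicit Types (x y z : 'rV[R]_D).

Lemma CS (a b : 'I_D -> R) :
  (\sum_i a i * b i) ^+ 2 <= (\sum_i a i ^+ 2) * (\sum_i b i ^+ 2).
Proof.
have H : 0 <= \sum_i \sum_j (a i * b j - a j * b i) ^+ 2.
  by apply: sumr_ge0 => i _; apply: sumr_ge0 => j _; exact: sqr_ge0.
pose SA := \sum_i a i ^+ 2. pose SB := \sum_i b i ^+ 2. pose SC := \sum_i a i * b i.
have E : \sum_i \sum_j (a i * b j - a j * b i) ^+ 2 = 2 * (SA * SB - SC ^+ 2).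
  have E1 : forall i j, (a i * b j - a j * b i) ^+ 2 =
     a i ^+ 2 * b j ^+ 2 + a j ^+ 2 * b i ^+ 2 - 2 * ((a i * b i) * (a j * b j)).
    by move=> i j; rewrite !expr2; ring.
  under eq_bigr => i _ do under eq_bigr => j _ do rewrite E1.
  under eq_bigr => i _ do rewrite sumrB big_split /=.
  rewrite sumrB big_split /=.
  rewrite [X in _ + X - _](exchange_big).
  have F1 : \sum_i \sum_j a i ^+ 2 * b j ^+ 2 = SA * SB.
    by rewrite /SA /SB mulr_suml; apply: eq_bigr => i _; rewrite mulr_sumr.
  have F2 : \sum_j \sum_i a j ^+ 2 * b i ^+ 2 = SA * SB.
    by rewrite /SA /SB mulr_suml; apply: eq_bigr => i _; rewrite mulr_sumr.
  have F3 : \sum_i \sum_j 2 * (a i * b i * (a j * b j)) =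
      2 * \sum_i (a i * b i * \sum_j a j * b j).
    by rewrite mulr_sumr; apply: eq_bigr => i _; rewrite mulr_sumr mulr_sumr.
  by rewrite F1 F3 -mulr_suml /SC; ring.
rewrite E in H; rewrite -subr_ge0; by rewrite pmulr_rge0 in H.
Qed.

Lemma en_ge0 x : 0 <= en x. Proof. exact: sqrtr_ge0. Qed.

Lemma ssq_ge0 (x : 'rV[R]_D) : 0 <= \sum_i (x ord0 i) ^+ 2.
Proof. by apply: sumr_ge0 => i _; exact: sqr_ge0. Qed.

Lemma en_sqr x : en x ^+ 2 = \sum_i (x ord0 i) ^+ 2.
Proof. by rewrite /eucl_norm sqr_sqrtr // ssq_ge0. Qed.

Lemma enN x : en (- x) = en x.
Proof. by rewrite /eucl_norm; congr Num.sqrt; apply: eq_bigr => i _; rewrite mxE sqrrN. Qed.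

Lemma en_sym x y : en (x - y) = en (y - x).
Proof. by rewrite -enN opprB. Qed.

Lemma en0 : en 0 = 0.
Proof. by rewrite /eucl_norm big1 ?sqrtr0 // => i _; rewrite mxE expr0n. Qed.

Lemma en_xx x : en (x - x) = 0.
Proof. by rewrite subrr en0. Qed.

Lemma coord_le_en x i : `|x ord0 i| <= en x.
Proof.
rewrite -sqrtr_sqr /eucl_norm ler_wsqrtr // (bigD1 i) //= lerDl.
by apply: sumr_ge0 => j _; exact: sqr_ge0.
Qed.

Lemma en_triangle x y : en (x + y) <= en x + en y.
Proof.
have h0 : 0 <= en x + en y by rewrite addr_ge0 // en_ge0.
rewrite -(ger0_norm h0) -sqrtr_sqr /eucl_norm ler_wsqrtr //.
rewrite sqrrD !en_sqr.
have -> : \sum_i ((x + y) ord0 i) ^+ 2 =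
   \sum_i (x ord0 i) ^+ 2 + 2 * \sum_i (x ord0 i * y ord0 i) + \sum_i (y ord0 i) ^+ 2.
  rewrite mulr_sumr -!big_split /=; apply: eq_bigr => i _; rewrite mxE; ring.
rewrite -mulr_natl lerD2r lerD2l mulr1 -[X in _ <= X]mulr_natl ler_pM2l //.
apply: (le_trans (ler_norm _)).
rewrite -sqrtr_sqr -[_ * _ in X in _ <= X]ger0_norm ?mulr_ge0 ?sqrtr_ge0 //.
rewrite -[X in _ <= X]sqrtr_sqr ler_wsqrtr // exprMn !sqr_sqrtr ?ssq_ge0 //; exact: CS.
Qed.

Lemma en_tri x y z : en (x - z) <= en (x - y) + en (y - z).
Proof. by have := en_triangle (x - y) (y - z); rewrite addrA subrK. Qed.

Lemma en_continuous : continuous en.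
Proof.
move=> x.
apply: (@continuous_comp _ _ _ (fun y : 'rV[R]_D => \sum_i (y ord0 i) ^+ 2) (@Num.sqrt R)); last exact: sqrt_continuous.
apply: (@continuous_big _ _ +%R 0 xpredT add_continuous) => // i _.
move=> y; apply: (@continuous_comp _ _ _ (fun y : 'rV[R]_D => y ord0 i) (fun r : R => r ^+ 2)).
  exact: coord_continuous.
exact: exprn_continuous.
Qed.

Lemma subq_continuous q : continuous (fun y : 'rV[R]_D => y - q).
Proof. move=> y. exact: (@cvgB R _ _ (nbhs y) _ (fun y : 'rV[R]_D => y) (fun _ => q) y q cvg_id (cvg_cst q)). Qed.

Lemma en_subq_continuous q : continuous (fun y : 'rV[R]_D => en (y - q)).
Proof.
move=> y; apply: (@continuous_comp _ _ _ (fun y : 'rV[R]_D => y - q) en).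
  exact: subq_continuous.
exact: en_continuous.
Qed.

Lemma en_qsub_continuous q : continuous (fun y : 'rV[R]_D => en (q - y)).
Proof.
have -> : (fun y : 'rV[R]_D => en (q - y)) = (fun y => en (y - q)).
  by apply: funext => y; rewrite en_sym.
exact: en_subq_continuous.
Qed.

Lemma open_far q r : open [set y : 'rV[R]_D | r < en (y - q)].
Proof.
exact: (@open_comp _ _ (fun y => en (y - q)) [set s | r < s]
  (fun y _ => en_subq_continuous q y) (@open_gt _ r)).
Qed.

Lemma closed_near q r : closed [set y : 'rV[R]_D | en (y - q) <= r].
Proof.
exact: (@preimage_closed _ _ (fun y => en (y - q)) [set s | s <= r]
  (fun y _ => en_subq_continuous q y) (@closed_le _ r)).
Qed.

Lemma closed_far q r : closed [set y : 'rV[R]_D | r <= en (y - q)].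
Proof.
exact: (@preimage_closed _ _ (fun y => en (y - q)) [set s | r <= s]
  (fun y _ => en_subq_continuous q y) (@closed_ge _ r)).
Qed.

Lemma open_near q r : open [set y : 'rV[R]_D | en (y - q) < r].
Proof.
exact: (@open_comp _ _ (fun y => en (y - q)) [set s | s < r]
  (fun y _ => en_subq_continuous q y) (@open_lt _ r)).
Qed.

End Eucl.
Arguments CS {R D}.
Arguments en_ge0 {R D}.
Arguments ssq_ge0 {R D}.
Arguments en_sqr {R D}.
Arguments enN {R D}.
Arguments en_sym {R D}.
Arguments en0 {R D}.
Arguments en_xx {R D}.
Arguments coord_le_en {R D}.
Arguments en_triangle {R D}.
Arguments en_tri {R D}.
Arguments en_continuous {R D}.
Arguments subq_continuous {R D}.
Arguments en_subq_continuous {R D}.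
Arguments en_qsub_continuous {R D}.
Arguments open_far {R D}.
Arguments closed_near {R D}.
Arguments closed_far {R D}.
Arguments open_near {R D}.
Section Borel.
Variables (R : realType) (D : nat).
Lemma borel_open (U : set 'rV[R]_D) : open U -> borelD U.
Proof. by move=> oU; apply: sub_gen_smallest. Qed.
Lemma borel_C (A : set 'rV[R]_D) : borelD A -> borelD (~` A).
Proof. move=> bA. rewrite -setTD. have [_ h _] := smallest_sigma_algebra setT [set U : set 'rV[R]_D | open U]. exact: h. Qed.
Lemma borel_closed (A : set 'rV[R]_D) : closed A -> borelD A.
Proof. move=> cA; rewrite -(setCK A); apply: borel_C; apply: borel_open; exact: closed_openC. Qed.
Lemma borel_bigcup (A : nat -> set 'rV[R]_D) : (forall k, borelD (A k)) -> borelD (\bigcup_k A k).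
Proof. move=> bA. have [_ _ h] := smallest_sigma_algebra setT [set U : set 'rV[R]_D | open U]. exact: h. Qed.
End Borel.
Arguments borel_open {R D U}.
Arguments borel_C {R D A}.
Arguments borel_closed {R D A}.
Arguments borel_bigcup {R D A}.

Section Null.
Local Open Scope ereal_scope.
Variables (R : realType) (dO : measure_display) (Omega : measurableType dO) (Prob : probability Omega R).

Lemma null_seq (I : eqType) (s : seq I) (F : I -> set Omega) :
  (forall i, measurable (F i)) -> (forall i, i \in s -> Prob (F i) = 0) ->
  measurable (\bigcup_(i in [set i | i \in s]) F i) /\
  Prob (\bigcup_(i in [set i | i \in s]) F i) = 0.
Proof.
move=> mF; elim: s => [|a s IH] H.
  by rewrite (_ : \bigcup_(i in _) _ = set0) ?measure0 // -subset0 => x [i].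
have -> : \bigcup_(i in [set i | i \in a :: s]) F i = F a `|` \bigcup_(i in [set i | i \in s]) F i.
  apply/seteqP; split => x.
    by move=> [i /=]; rewrite inE => /orP[/eqP -> | iS] Fx; [left | right; exists i].
  by case=> [Fx | [i /= iS Fx]]; [exists a => //=; rewrite mem_head | exists i => //=; rewrite inE iS orbT].
have [m0 p0] : measurable (\bigcup_(i in [set i | i \in s]) F i) /\
  Prob (\bigcup_(i in [set i | i \in s]) F i) = 0.
  by apply: IH => i iS; apply: H; rewrite inE iS orbT.
split; first exact: measurableU.
apply/eqP; rewrite -measure_le0.
apply: le_trans (measureU2 _ _ _) _ => //.
have h1 : Prob (F a) <= 0 by rewrite (H a) ?mem_head.
have h2 : Prob (\bigcup_(i in [set i | i \in s]) F i) <= 0 by rewrite p0.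
by apply: le_trans (leeD h1 h2) _; rewrite adde0.
Qed.

Variable (D : nat).
Lemma compact_null (Y : Omega -> 'rV[R]_D)
  (mY : forall A, borelD A -> measurable (Y @^-1` A)) (K : set 'rV[R]_D) :
  compact K -> closed K ->
  (forall y, K y -> exists2 U, open U & U y /\ Prob (Y @^-1` U) = 0) ->
  Prob (Y @^-1` K) = 0.
Proof.
move=> cK clK H.
have /choice [f Hf] : forall y, exists U : set 'rV[R]_D,
    open U /\ (K y -> U y /\ Prob (Y @^-1` U) = 0).
  move=> y; have [Ky|nKy] := pselect (K y).
    by have [U oU [Uy pU]] := H y Ky; exists U.
  by exists set0; split => //; exact: open0.
move: cK; rewrite compact_cover => /(_ _ K f) [].
- by move=> i _; exact: (Hf i).1.
- by move=> y Ky; exists y => //; exact: ((Hf y).2 Ky).1.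
move=> D' D'K KD'.
have D'K' : forall i, i \in (finmap.enum_fset D') -> K i by move=> i iD; have := D'K i iD; rewrite in_setE.
have [mU pU] := @null_seq _ (finmap.enum_fset D') (fun y => Y @^-1` f y)
   (fun i => mY _ (borel_open (Hf i).1)) (fun i iD => ((Hf i).2 (D'K' i iD)).2).
apply/eqP; rewrite -measure_le0.
rewrite -pU; apply: le_measure; rewrite ?inE //.
  by apply: mY; exact: borel_closed.
by move=> w /KD' [i iD fi]; exists i.
Qed.
End Null.
Lemma le_maxl (R : realType) (a b : R) : a <= Num.max a b.
Proof. by rewrite le_max lexx. Qed.
Lemma le_maxr (R : realType) (a b : R) : b <= Num.max a b.
Proof. by rewrite le_max lexx orbT. Qed.
Arguments le_maxl {R}.
Arguments le_maxr {R}.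

Lemma normr_le_en (R : realType) (D : nat) (x : 'rV[R]_D) : `|x| <= eucl_norm x.
Proof.
rewrite (_ : `|x| = mx_norm x) // mx_normrE; apply: bigmax_le => [|ij _]; first exact: en_ge0.
by case: ij => i j /=; rewrite (ord1 i); exact: coord_le_en.
Qed.

Section Outside.
Variables (R : realType) (D : nat) (dO : measure_display) (Omega : measurableType dO) (Prob : probability Omega R).
Variables (Y : Omega -> 'rV[R]_D) (M : set 'rV[R]_D) (t : R).
Hypothesis mY : forall A, borelD A -> measurable (Y @^-1` A).
Hypothesis t0 : (0 <= t)%R.
Hypothesis Msupp : M = prob_support (fun A => Prob (Y @^-1` A)).

Let W := [set y : 'rV[R]_D | (t%:E < eucl_dist y M)%E].
Let Kk (k : nat) := [set y : 'rV[R]_D | (eucl_norm (y - 0) <= k%:R)%R] `&`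
   \bigcap_(a in M) [set y | (t + k.+1%:R^-1 <= eucl_norm (y - a))%R].

Let W_eq : W = \bigcup_k Kk k.
Proof.
apply/seteqP; split => y.
  rewrite /W /= => tdy.
  have [s ts sd] : exists2 s : R, (t < s)%R & (s%:E <= eucl_dist y M)%E.
    move: tdy; case: (eucl_dist y M) => [r| |] //=.
      by rewrite lte_fin => tr; exists r.
    by move=> _; exists (t + 1)%R; [rewrite ltrDl | rewrite leey].
  pose k := Num.Def.archi_bound (Num.max (eucl_norm (y - 0)) (s - t)^-1).
  have hk := archi_boundP (le_trans (en_ge0 (y - 0)) (le_maxl (eucl_norm (y - 0)) (s - t)^-1)).
  exists k => //; split.
    rewrite /= (le_trans (le_maxl _ ((s - t)^-1)%R)) //; exact: ltW.
  move=> a Ma /=.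
  have st0 : (0 < s - t)%R by rewrite subr_gt0.
  have : (k.+1%:R^-1 <= s - t)%R.
    rewrite -[X in (_ <= X)%R]invrK lef_pV2 ?posrE ?invr_gt0 //.
    apply: ltW; apply: le_lt_trans (le_maxr (eucl_norm (y - 0)) _) _.
    by apply: lt_trans hk _; rewrite ltr_nat.
  move=> hk1.
  have : (s%:E <= (eucl_norm (y - a))%:E)%E.
    apply: le_trans sd _; apply: ereal_inf_lbound; by exists a.
  rewrite lee_fin => /(le_trans _); apply.
  by rewrite -lerBrDl.
move=> [k _ [_ Hk]]; rewrite /W /=.
apply: (@lt_le_trans _ _ (t + k.+1%:R^-1)%:E).
  by rewrite lte_fin ltrDl invr_gt0 ltr0Sn.
apply/ereal_infP => z [a Ma <-]; rewrite lee_fin; exact: Hk a Ma.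
Qed.

Let Kk_closed k : closed (Kk k).
Proof.
apply: closedI; first exact: closed_near.
by apply: closed_bigI => a _; exact: closed_far.
Qed.

Let Kk_bounded k : bounded_set (Kk k).
Proof.
rewrite /= /bounded_near.
apply: filterS (nbhs_pinfty_ge (r := k%:R) (num_real _)) => M0 kM0 y [Ky _] /=.
apply: le_trans (@normr_le_en _ _ y) _; rewrite -[y]subr0; exact: le_trans Ky kM0.
Qed.

Let Kk_null k : Prob (Y @^-1` Kk k) = 0%E.
Proof.
apply: compact_null => //; first exact: bounded_closed_compact.
move=> y [_ Hk].
have nMy : ~ M y.
  move=> My; have := Hk y My; rewrite /= en_xx => h.
  have : 0 < t + k.+1%:R^-1 by rewrite ltr_pwDr ?invr_gt0 ?ltr0Sn.
  by rewrite ltNge h.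
move: nMy; rewrite Msupp /prob_support /= => /existsNP [U /not_implyP [oU /not_implyP [Uy nP]]].
exists U => //; split => //.
by apply/eqP; rewrite -measure_le0 leNgt; apply/negP.
Qed.

Lemma outside_borel : borelD [set y : 'rV[R]_D | (t%:E < eucl_dist y M)%E].
Proof.
rewrite -/W W_eq; apply: borel_bigcup => k; apply: borel_closed; exact: Kk_closed.
Qed.

Lemma outside_null : Prob (Y @^-1` [set y : 'rV[R]_D | (t%:E < eucl_dist y M)%E]) = 0%E.
Proof.
apply/eqP; rewrite -measure_le0.
have h := @measure_sigma_subadditive _ _ _ Prob (Y @^-1` W) (fun k => Y @^-1` Kk k)
  (fun k => mY _ (borel_closed (Kk_closed k))) (mY _ outside_borel).
apply: le_trans (h _) _.
  by move=> w; rewrite /preimage /= -/W W_eq => -[k _ Kw]; exists k.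
by rewrite eseries0 // => k _ _; exact: Kk_null.
Qed.
End Outside.
Lemma rho_lower (R : realType) (f : R -> R) (rho t0 C2 : R) :
  f t @[t --> 0^'+] --> rho ->
  (forall t, 0 < t < t0 -> derivable (fun t => if t == 0 then rho else f t) t 1 /\
      `|derive1 (fun t => if t == 0 then rho else f t) t| <= C2) ->
  forall s, 0 < s -> s < t0 -> rho - C2 * s <= f s.
Proof.
move=> fr Hg s s0 st0.
set g := fun t => if t == 0 then rho else f t.
have key : forall e, 0 < e -> e < s -> f e <= f s + C2 * s.
  move=> e e0 es.
  have Hx : forall x, e <= x -> x <= s -> 0 < x < t0.
    move=> x ex xs; apply/andP; split; [exact: lt_le_trans ex | exact: le_lt_trans st0].
  have [c cI eq] : exists2 c, c \in `]e, s[ & g s - g e = derive1 g c * (s - e).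
    apply: (@MVT _ g (derive1 g) e s es).
  - move=> x; rewrite in_itv /= => /andP[ex xs].
    rewrite derive1E; apply: derivableP; apply: (Hg x _).1.
    exact: Hx (ltW ex) (ltW xs).
  - apply: derivable_within_continuous => x; rewrite in_itv /= => /andP[ex xs].
    exact: (Hg x (Hx x ex xs)).1.
  move: cI; rewrite in_itv /= => /andP[ec cs].
  have [_ hc] := Hg c (Hx c (ltW ec) (ltW cs)).
  move: eq; rewrite /g (negbTE (lt0r_neq0 s0)) (negbTE (lt0r_neq0 e0)) => eq.
  have h1 : - derive1 g c <= C2 by apply: le_trans hc; rewrite -normrN ler_norm.
  have h2 : 0 <= C2 by apply: le_trans hc.
  move: h1 h2 eq; set a := derive1 g c => h1 h2 eq.
  have h3 : 0 <= s - e by rewrite subr_ge0 ltW.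
  nra.
have : rho <= f s + C2 * s.
  have := @closed_cvg _ _ _ _ (fun e => f e) [set x | x <= f s + C2 * s] (@closed_le _ _) _ rho fr.
  apply.
  near=> e; apply: key; near: e; [exact: nbhs_right_gt | exact: nbhs_right_lt].
lra.
Unshelve. all: end_near. Qed.
Lemma net (R : realType) (D : nat) (M : set 'rV[R]_D) (eps : R) : compact M -> 0 < eps ->
  exists Q : seq 'rV[R]_D, (forall q, q \in Q -> M q) /\
    (forall p, M p -> exists2 q, q \in Q & eucl_norm (p - q) < eps).
Proof.
move=> cM e0.
move: cM; rewrite compact_cover => /(_ _ M (fun q => [set y | eucl_norm (y - q) < eps])) [].
- by move=> i _; exact: open_near.
- by move=> p Mp; exists p => //=; rewrite en_xx.
move=> D' D'M MD'; exists (finmap.enum_fset D'); split.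
  by move=> q qD; have := D'M q qD; rewrite in_setE.
by move=> p /MD' [q qD pq]; exists q.
Qed.
Lemma ball_borel (R : realType) (D : nat) (x : 'rV[R]_D) s : borelD (eucl_ball x s).
Proof. apply: borel_closed; exact: closed_near. Qed.
Arguments ball_borel {R D}.

Lemma bigcup_cons (T I : eqType) (a : I) (s : seq I) (F : I -> set T) :
  \bigcup_(i in [set i | i \in a :: s]) F i = F a `|` \bigcup_(i in [set i | i \in s]) F i.
Proof.
apply/seteqP; split => x.
  by move=> [i /=]; rewrite inE => /orP[/eqP -> | iS] Fx; [left | right; exists i].
by case=> [Fx | [i /= iS Fx]]; [exists a => //=; rewrite mem_head | exists i => //=; rewrite inE iS orbT].
Qed.

Lemma bigcup_nil (T : Type) (I : eqType) (F : I -> set T) :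
  \bigcup_(i in [set i | i \in ([::] : seq I)]) F i = set0.
Proof. by rewrite -subset0 => x [i]. Qed.

Section Pack.
Variables (R : realType) (D : nat) (dO : measure_display) (Omega : measurableType dO) (Prob : probability Omega R).
Variables (Y : Omega -> 'rV[R]_D) (M : set 'rV[R]_D) (r c : R).
Hypothesis mY : forall A, borelD A -> measurable (Y @^-1` A).
Hypothesis ball_lb : forall x, M x -> (c%:E <= Prob (Y @^-1` eucl_ball x (r / 2)))%E.

Definition sep (L : seq 'rV[R]_D) :=
  pairwise (fun p q => r < eucl_norm (p - q)) L && all (fun p => `[< M p >]) L.

Lemma pack L : sep L ->
  measurable (\bigcup_(q in [set q | q \in L]) Y @^-1` eucl_ball q (r / 2)) /\
  (((size L)%:R * c)%:E <= Prob (\bigcup_(q in [set q | q \in L]) Y @^-1` eucl_ball q (r / 2)))%E.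
Proof.
elim: L => [|p L IH].
  by rewrite bigcup_nil mul0r measure0.
rewrite /sep pairwise_cons /= => /andP[/andP[rp pL] /andP[/asboolP Mp ML]].
have [mU pU] := IH (introT andP (conj pL ML)).
rewrite bigcup_cons; split; first by apply: measurableU => //; exact: mY _ (ball_borel _ _).
rewrite measureU //; first last.
- rewrite -subset0 => w [/= bp [q /= qL bq]].
  move/allP: rp => /(_ q qL).
  move=> h; have h2 := en_tri p (Y w) q.
  rewrite (en_sym p (Y w)) in h2.
  have h3 : eucl_norm (p - q) <= r.
    by apply: le_trans h2 _; rewrite [leRHS](splitr r); apply: lerD.
  by move: h; rewrite ltNge h3.
- exact: mY _ (ball_borel _ _).
rewrite -addn1 natrD mulrDl mul1r EFinD addeC.
by apply: leeD => //; exact: ball_lb.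
Qed.

Lemma pack_size L : sep L -> (size L)%:R * c <= 1.
Proof.
move=> /pack [mU pU]; rewrite -lee_fin; apply: le_trans pU _.
exact: probability_le1.
Qed.

Lemma max_sep : 0 < c -> exists L, sep L /\
  forall p, M p -> exists2 q, q \in L & eucl_norm (p - q) <= r.
Proof.
move=> c0.
pose N := Num.Def.archi_bound c^-1.
pose P m := `[< exists L, sep L /\ size L = m >].
have exP : exists m, P m by exists 0%N; apply/asboolP; exists [::].
have ubP : forall m, P m -> (m <= N)%N.
  move=> m /asboolP [L [sL <-]].
  have h := pack_size L sL.
  have : (size L)%:R <= c^-1 by rewrite -(mul1r c^-1) ler_pdivlMr.
  move=> /le_lt_trans /(_ (archi_boundP _)); rewrite ltr_nat invr_ge0 ltW // => /(_ isT).
  exact: ltnW.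
case: (ex_maxnP exP ubP) => m /asboolP [L [sL sz]] maxm.
exists L; split => // p Mp.
case: (pselect (exists2 q, q \in L & eucl_norm (p - q) <= r)) => // H; exfalso.
have sp : sep (p :: L).
  rewrite /sep pairwise_cons /=; move: sL => /andP[pL ML].
  rewrite pL ML andbT andbT; apply/andP; split; last exact/asboolP.
  apply/allP => q qL; rewrite ltNge; apply/negP => h; apply: H; by exists q.
have := maxm (size (p :: L)) (introT (asboolP _) (ex_intro _ (p :: L) (conj sp erefl))).
by rewrite /= sz ltnn.
Qed.
End Pack.
Section Empty.
Variables (R : realType) (D : nat) (dO : measure_display) (Omega : measurableType dO) (Prob : probability Omega R).
Variables (X : nat -> Omega -> 'rV[R]_D) (n : nat).
Hypothesis mX : forall i A, borelD A -> measurable (X i @^-1` A).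
Hypothesis iX : forall i A, borelD A -> Prob (X i @^-1` A) = Prob (X 0%N @^-1` A).
Hypothesis indep : forall (n : nat) (A : 'I_n -> set 'rV[R]_D), (forall i, borelD (A i)) ->
     Prob (\bigcap_(i in [set: 'I_n]) (X i @^-1` A i)) =
     (\prod_(i < n) Prob (X i @^-1` A i))%E.

Lemma fin_prob (A : set Omega) : measurable A -> (fine (Prob A))%:E = Prob A.
Proof. by move=> mA; rewrite fineK // fin_num_measure. Qed.

Lemma empty_ball (B : set 'rV[R]_D) : borelD B ->
  Prob (\bigcap_(i in [set i | (i < n)%N]) X i @^-1` (~` B)) =
  EFin ((1 - fine (Prob (X 0%N @^-1` B))) ^+ n).
Proof.
move=> bB.
have -> : \bigcap_(i in [set i | (i < n)%N]) X i @^-1` (~` B) =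
    \bigcap_(i in [set: 'I_n]) X i @^-1` ((fun _ => ~` B) i).
  apply/seteqP; split => w /= h.
    by move=> i _; apply: h => /=; exact: ltn_ord.
  by move=> i /= iN; exact: (h (Ordinal iN)).
rewrite indep; last by move=> _; exact: borel_C.
have E : forall i : 'I_n, Prob (X i @^-1` (~` B)) = (1 - fine (Prob (X 0%N @^-1` B)))%:E.
  move=> i; rewrite preimage_setC probability_setC; last exact: mX.
  by rewrite iX // -fin_prob ?EFinB //; exact: mX.
under eq_bigr => i _ do rewrite E.
by rewrite prodEFin prodr_const card_ord.
Qed.
End Empty.
Section UB.
Variables (R : realType) (dO : measure_display) (Omega : measurableType dO) (Prob : probability Omega R).
Lemma ub_seq (I : eqType) (s : seq I) (F : I -> set Omega) (b : R) :
  (forall i, measurable (F i)) -> (forall i, i \in s -> (Prob (F i) <= b%:E)%E) ->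
  measurable (\bigcup_(i in [set i | i \in s]) F i) /\
  (Prob (\bigcup_(i in [set i | i \in s]) F i) <= ((size s)%:R * b)%:E)%E.
Proof.
move=> mF; elim: s => [|a s IH] H.
  by rewrite bigcup_nil measure0 mul0r.
rewrite bigcup_cons.
have [m0 p0] := IH (fun i iS => H i (introT orP (or_intror iS))).
split; first exact: measurableU.
apply: le_trans (measureU2 _ _ _) _ => //.
have h1 : (Prob (F a) <= b%:E)%E by apply: H; rewrite mem_head.
rewrite /= -addn1 natrD mulrDl mul1r EFinD addeC.
by apply: leeD.
Qed.
End UB.
Lemma sup_gt (R : realType) (T : Type) (A : set T) (f : T -> \bar R) (x : \bar R) :
  (x < ereal_sup [set f a | a in A])%E <-> exists2 a, A a & (x < f a)%E.
Proof.
split.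
  by move/ereal_sup_gtP => [y [a Aa <-] lt]; exists a.
move=> [a Aa lt]; apply: lt_le_trans lt _; apply: ereal_sup_ubound; by exists a.
Qed.

Lemma dist_gt (R : realType) (D : nat) (b : 'rV[R]_D) (S : set 'rV[R]_D) (t : R) :
  (t%:E < eucl_dist b S)%E <->
  exists2 dl, 0 < dl & forall a, S a -> t + dl <= eucl_norm (b - a).
Proof.
split.
  move=> tdy.
  have [s ts sd] : exists2 s : R, (t < s)%R & (s%:E <= eucl_dist b S)%E.
    move: tdy; case: (eucl_dist b S) => [r| |] //=.
      by rewrite lte_fin => tr; exists r.
    by move=> _; exists (t + 1)%R; [rewrite ltrDl | rewrite leey].
  exists (s - t); first by rewrite subr_gt0.
  move=> a Sa; rewrite addrC subrK -lee_fin; apply: le_trans sd _.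
  by apply: ereal_inf_lbound; exists a.
move=> [dl dl0 H].
apply: (@lt_le_trans _ _ (t + dl)%:E); first by rewrite lte_fin ltrDl.
apply/ereal_infP => z [a Sa <-]; rewrite lee_fin; exact: H.
Qed.
Theorem mainTheorem2 (R : realType) (D d : nat)
  (dO : measure_display) (Omega : measurableType dO)
  (Prob : probability Omega R)
  (X : nat -> Omega -> 'rV[R]_D)
  (M : set 'rV[R]_D)
  (rho t0 C2 : R) :
  (* the X_i are random vectors *)
  (forall i A, borelD A -> measurable (X i @^-1` A)) ->
  (* identically distributed *)
  (forall i A, borelD A -> Prob (X i @^-1` A) = Prob (X 0%N @^-1` A)) ->
  (* mutually independent *)
  (forall (n : nat) (A : 'I_n -> set 'rV[R]_D), (forall i, borelD (A i)) ->
     Prob (\bigcap_(i in [set: 'I_n]) (X i @^-1` A i)) =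
     (\prod_(i < n) Prob (X i @^-1` A i))%E) ->
  (* common law P, with prob_support M *)
  let P := fun A : set 'rV[R]_D => Prob (X 0%N @^-1` A) in
  M = prob_support P ->
  compact M ->
  smooth_submanifold d M ->
  positive_reach M ->
  let rho_xt := fun (x : 'rV[R]_D) (t : R) => fine (P (eucl_ball x (t / 2))) / t ^+ d in
  let rho_t := fun t : R => inf [set rho_xt x t | x in M] in
  rho_t t @[t --> 0^'+] --> rho ->
  0 < rho ->
  0 < t0 ->
  let g := fun t : R => if t == 0 then rho else rho_t t in
  (* g differentiable on [0, t0] with |g'| <= C2 there *)
  (exists2 l : R, `|l| <= C2 & (fun h => h^-1 * (g h - g 0)) h @[h --> 0^'+] --> l) ->
  (forall t, 0 < t < t0 -> derivable g t 1 /\ `|derive1 g t| <= C2) ->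
  (exists2 l : R, `|l| <= C2 &
      (fun h => h^-1 * (g (t0 + h) - g t0)) h @[h --> 0^'-] --> l) ->
  forall (n : nat) (t : R), (1 <= n)%N ->
    0 < t -> 2 * C2 * t < rho -> t < t0 ->
    (Prob [set w | (hausdorff_distance [set X i w | i in [set i | (i < n)%N]] M > t%:E)%E]
      <= ((2 ^+ d.+1 / (rho * t ^+ d)) * expR (- (n%:R * rho * t ^+ d) / 2))%:E)%E.
Proof.
move=> mX iX indep P Msupp cM _ _ rho_xt rho_t rcvg rho0 t00 g _ Hg _ n t n1 tpos tC2 tt0.
have RL := @rho_lower R rho_t rho t0 C2 rcvg Hg.
have C20 : 0 <= C2.
  have h : 0 < t / 2 < t0 by apply/andP; split; lra.
  by have [_ hc] := Hg _ h; apply: le_trans hc.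
have lb_t : rho / 2 <= rho_t t.
  by apply: le_trans (RL t tpos tt0); nra.
have lb_t2 : rho / 2 <= rho_t (t / 2).
  apply: le_trans (RL (t / 2) _ _); [nra | lra | lra].
have inf_le : forall s x, 0 < s -> M x -> rho_t s <= rho_xt x s.
  move=> s x s0 Mx; apply: ge_inf; last by exists x.
  exists 0 => _ [y My <-]; rewrite /rho_xt divr_ge0 // ?fine_ge0 ?measure_ge0 //.
  by rewrite exprn_ge0 // ltW.
have ball_t : forall x, M x -> rho / 2 * t ^+ d <= fine (P (eucl_ball x (t / 2))).
  move=> x Mx; have := le_trans lb_t (inf_le t x tpos Mx).
  by rewrite /rho_xt ler_pdivlMr ?exprn_gt0.
have t20 : 0 < t / 2 by lra.
have ball_t2 : forall x, M x -> rho / 2 * (t / 2) ^+ d <= fine (P (eucl_ball x (t / 2 / 2))).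
  move=> x Mx; have := le_trans lb_t2 (inf_le (t / 2) x t20 Mx).
  by rewrite /rho_xt ler_pdivlMr ?exprn_gt0.
pose c := rho / 2 * (t / 2) ^+ d.
have c0 : 0 < c by rewrite mulr_gt0 ?divr_gt0 ?exprn_gt0.
have ball_lbE : forall x, M x -> (c%:E <= Prob (X 0%N @^-1` eucl_ball x (t / 2 / 2)))%E.
  move=> x Mx; rewrite -(@fin_prob _ _ _ Prob _ (mX _ _ (ball_borel _ _))) lee_fin.
  exact: ball_t2.
have [L [sL Lmax]] := @max_sep R D dO Omega Prob (X 0%N) M (t / 2) c (mX 0%N) ball_lbE c0.
have szL := @pack_size R D dO Omega Prob (X 0%N) M (t / 2) c (mX 0%N) ball_lbE L sL.
pose Wt := [set y : 'rV[R]_D | (t%:E < eucl_dist y M)%E].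
pose A1 := \bigcup_(i in [set i | i \in iota 0 n]) X i @^-1` Wt.
pose A2 := [set w | exists2 b, M b & exists2 dl, 0 < dl &
   forall i, (i < n)%N -> t + dl <= eucl_norm (b - X i w)].
have EA : [set w | (hausdorff_distance [set X i w | i in [set i | (i < n)%N]] M > t%:E)%E]
    = A1 `|` A2.
  apply/seteqP; split => w.
  - rewrite /= /hausdorff_distance lt_max => /orP[/sup_gt [a [i /= iN <-] h]|/sup_gt [b Mb /dist_gt [dl dl0 H]]].
      by left; exists i => //=; rewrite mem_iota add0n iN.
    by right; exists b => //; exists dl => // i iN; apply: H; exists i.
  - case=> [[i /= iI Wi]|[b Mb [dl dl0 H]]]; rewrite /= /hausdorff_distance lt_max; apply/orP.
      left; apply/sup_gt; exists (X i w) => //; exists i => //.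
      by move: iI; rewrite mem_iota add0n.
    right; apply/sup_gt; exists b => //; apply/dist_gt; exists dl => // a [i iN <-]; exact: H.
have [mA1 pA1] : measurable A1 /\ Prob A1 = 0%E.
  apply: null_seq => i; first exact: mX _ _ (outside_borel _ _ _ _).
  move=> _; rewrite iX; last exact: outside_borel.
  by apply: outside_null => //; [exact: mX | exact: ltW].
have /choice [Q HQ] : forall k : nat, exists Q : seq 'rV[R]_D, (forall q, q \in Q -> M q) /\
    (forall p, M p -> exists2 q, q \in Q & eucl_norm (p - q) < k.+1%:R^-1).
  by move=> k; apply: net => //; rewrite invr_gt0 ltr0Sn.
pose Bk k := \bigcup_(j in [set j | (j < size (Q k))%N]) \bigcap_(i in [set i | (i < n)%N])
   X i @^-1` [set y | t + k.+1%:R^-1 < eucl_norm (y - nth 0 (Q k) j)].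
have A2B : A2 = \bigcup_k Bk k.
  apply/seteqP; split => w.
  - move=> [b Mb [dl dl0 H]].
    pose k := Num.Def.archi_bound (2 / dl).
    have hk : 2 / dl < k.+1%:R.
      apply: lt_trans (archi_boundP _) _; first by rewrite ltW // divr_gt0.
      by rewrite ltr_nat.
    have kpos : 0 < k.+1%:R :> R by rewrite ltr0Sn.
    have hk2 : 2 * k.+1%:R^-1 < dl.
      rewrite ltr_pdivrMr // in hk; rewrite -[2 * _]/(2 / k.+1%:R) ltr_pdivrMr //.
      by rewrite mulrC.
    have [q qQ bq] := (HQ k).2 b Mb.
    exists k => //; exists (index q (Q k)); first by rewrite /= index_mem.
    move=> i iN /=; rewrite nth_index //.
    have h := en_tri b q (X i w).
    have := H i iN; rewrite (en_sym q (X i w)) in h.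
    move: h bq hk2; set u := eucl_norm (b - X i w); set v := eucl_norm (b - q);
      set z := eucl_norm (X i w - q); set e := k.+1%:R^-1.
    move=> h bq hk2 h'; lra.
  - move=> [k _ [j /= jQ Hj]].
    exists (nth 0 (Q k) j); first exact: (HQ k).1 _ (mem_nth 0 jQ).
    exists k.+1%:R^-1; first by rewrite invr_gt0.
    by move=> i iN; rewrite en_sym; exact: ltW (Hj i iN).
have mA2 : measurable A2.
  rewrite A2B; apply: bigcupT_measurable => k; apply: bigcup_measurable => j _.
  apply: bigcap_measurable; first by exists 0%N.
  by move=> i _; apply: mX; apply: borel_open; exact: open_far.
pose e := expR (- (n%:R * rho * t ^+ d) / 2).
pose Bq q := \bigcap_(i in [set i | (i < n)%N]) X i @^-1` (~` eucl_ball q (t / 2)).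
have mBq : forall q, measurable (Bq q).
  move=> q; apply: bigcap_measurable; first by exists 0%N.
  by move=> i _; apply: mX; apply: borel_C; exact: ball_borel.
have pBq : forall q, q \in L -> (Prob (Bq q) <= e%:E)%E.
  move=> q qL.
  have Mq : M q by move: sL => /andP[_ /allP /(_ q qL) /asboolP].
  rewrite /Bq (@empty_ball R D dO Omega Prob X n mX iX indep _ (ball_borel q (t / 2))) lee_fin.
  have p1 : fine (Prob (X 0%N @^-1` eucl_ball q (t / 2))) <= 1.
    rewrite -lee_fin (@fin_prob _ _ _ Prob _ (mX _ _ (ball_borel _ _))).
    exact: probability_le1 (mX _ _ (ball_borel _ _)).
  have p2 := ball_t q Mq.
  move: p1 p2; rewrite -/(P (eucl_ball q (t / 2))); set p := fine _ => p1 p2.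
  have h : 1 - p <= expR (- (rho / 2 * t ^+ d)).
    apply: le_trans (expR_ge1Dx _); lra.
  apply: le_trans (lerXn2r n _ _ h) _.
  - by rewrite nnegrE; lra.
  - by rewrite nnegrE expR_ge0.
  rewrite /e -expRM_natl le_eqVlt; apply/orP; left; apply/eqP; congr expR; ring.
have [mA2' pA2'] := @ub_seq R dO Omega Prob _ L Bq e mBq pBq.
have A2sub : A2 `<=` \bigcup_(q in [set q | q \in L]) Bq q.
  move=> w [b Mb [dl dl0 H]]; have [q qL bq] := Lmax b Mb; exists q => //.
  move=> i iN /= ball; move: ball; rewrite /eucl_ball /= => ball.
  have h := en_tri b q (X i w); rewrite (en_sym q (X i w)) in h.
  have := H i iN; lra.
rewrite EA.
apply: le_trans (measureU2 _ mA1 mA2) _.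
have h1 : (Prob A1 <= 0)%E by rewrite pA1.
apply: le_trans (leeD h1 (lexx (Prob A2))) _; rewrite add0e.
apply: le_trans (@le_measure _ _ _ Prob A2 _ (mem_set mA2) (mem_set mA2') A2sub) _.
apply: le_trans pA2' _; rewrite lee_fin.
apply: ler_wpM2r; first exact: expR_ge0.
have -> : 2 ^+ d.+1 / (rho * t ^+ d) = c^-1.
  rewrite /c expr_div_n exprS; field.
  by apply/and3P; split; rewrite ?expf_neq0 ?lt0r_neq0.
by rewrite -(mul1r c^-1) ler_pdivlMr.
Qed.
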